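(* Let $\widetilde W\subset S^{n+1}$ be a spherical convex body. Then $\widetilde W=\widetilde W^{\circ}$ if and only if $\widetilde W$ is of constant width $\pi/2$.
   Context: For $P\in S^{n+1}$, $H(P)=\{Q\in S^{n+1}:P\cdot Q\ge0\}$. A subset of $S^{n+1}$ is hemispherical if it is disjoint from some $H(P)$. The arc $PQ$ is $\{((1-t)P+tQ)/\|(1-t)P+tQ\|:t\in[0,1]\}$, of length $|PQ|=\arccos(P\cdot Q)$. A spherical convex body is a closed hemispherical set with nonempty interior containing the arc $PQ$ for all its points $P,Q$. The spherical polar set is $\widetilde W^\circ=\bigcap_{P\in\widetilde W}H(P)$. $H(P)$ supports $\widetilde W$ if $\widetilde W\subset H(P)$ and $\partial\widetilde W\cap\partial H(P)\ne\emptyset$. The lune $H(P)\cap H(Q)$ ($P\ne\pm Q$) has thickness $\Delta(H(P)\cap H(Q))=\pi-|PQ|$. For $H(P)$ supporting $\widetilde W$, $\mathrm{width}_{H(P)}\widetilde W$ is the minimum of $\Delta(H(P)\cap H(Q))$ over hemispheres $H(Q)$ supporting $\widetilde W$ with $\widetilde W\subset H(P)\cap H(Q)$. $\widetilde W$ is of constant width $\rho$ ($0<\rho<\pi$) if $\mathrm{width}_{H(P)}\widetilde W=\rho$ for every supporting hemisphere $H(P)$. *)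

(* Defs.v *)
From Stdlib Require Import Reals.
Open Scope R_scope.

(* Vectors of R^{n+2} are represented by functions nat -> R; only the
   coordinates 0..n+1 are relevant, points of the sphere are required to
   vanish beyond index n+1. *)
Definition vec := nat -> R.

Fixpoint sumR (m : nat) (f : nat -> R) : R :=
  match m with O => 0 | S k => sumR k f + f k end.

Definition dot (n : nat) (x y : vec) : R := sumR (S (S n)) (fun i => x i * y i).
Definition vnorm (n : nat) (x : vec) : R := sqrt (dot n x x).
Definition vadd (x y : vec) : vec := fun i => x i + y i.
Definition vscale (a : R) (x : vec) : vec := fun i => a * x i.
Definition vopp (x : vec) : vec := fun i => - x i.
Definition vdist (n : nat) (x y : vec) : R := vnorm n (vadd x (vopp y)).

Definition sphere (n : nat) (P : vec) : Prop :=
  (forall i, (S (S n) <= i)%nat -> P i = 0) /\ dot n P P = 1.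

Definition hemi (n : nat) (P : vec) (Q : vec) : Prop :=
  sphere n Q /\ dot n P Q >= 0.

Definition hemispherical (n : nat) (W : vec -> Prop) : Prop :=
  exists P, sphere n P /\ forall Q, W Q -> ~ hemi n P Q.

Definition arc_point (n : nat) (P Q : vec) (t : R) : vec :=
  let v := vadd (vscale (1 - t) P) (vscale t Q) in vscale (/ vnorm n v) v.

Definition arc (n : nat) (P Q : vec) (X : vec) : Prop :=
  exists t, 0 <= t <= 1 /\ X = arc_point n P Q t.

Definition sdist (n : nat) (P Q : vec) : R := acos (dot n P Q).

Definition sph_closed (n : nat) (A : vec -> Prop) : Prop :=
  forall Q, sphere n Q -> ~ A Q ->
    exists eps, eps > 0 /\ forall X, sphere n X -> vdist n X Q < eps -> ~ A X.

Definition sph_interior (n : nat) (A : vec -> Prop) (Q : vec) : Prop :=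
  sphere n Q /\ exists eps, eps > 0 /\
    forall X, sphere n X -> vdist n X Q < eps -> A X.

Definition sph_boundary (n : nat) (A : vec -> Prop) (Q : vec) : Prop :=
  sphere n Q /\ forall eps, eps > 0 ->
    (exists X, sphere n X /\ vdist n X Q < eps /\ A X) /\
    (exists X, sphere n X /\ vdist n X Q < eps /\ ~ A X).

Definition convex_body (n : nat) (W : vec -> Prop) : Prop :=
  (forall P, W P -> sphere n P) /\
  sph_closed n W /\
  hemispherical n W /\
  (exists P, sph_interior n W P) /\
  (forall P Q, W P -> W Q -> forall X, arc n P Q X -> W X).

Definition polar (n : nat) (W : vec -> Prop) (Q : vec) : Prop :=
  sphere n Q /\ forall P, W P -> hemi n P Q.

Definition supports (n : nat) (P : vec) (W : vec -> Prop) : Prop :=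
  sphere n P /\ (forall X, W X -> hemi n P X) /\
  exists X, sph_boundary n W X /\ sph_boundary n (hemi n P) X.

Definition thickness (n : nat) (P Q : vec) : R := PI - sdist n P Q.

Definition width_cand (n : nat) (W : vec -> Prop) (P Q : vec) : Prop :=
  supports n Q W /\ Q <> P /\ Q <> vopp P /\
  (forall X, W X -> hemi n P X /\ hemi n Q X).

Definition width_eq (n : nat) (W : vec -> Prop) (P : vec) (w : R) : Prop :=
  (exists Q, width_cand n W P Q /\ thickness n P Q = w) /\
  (forall Q, width_cand n W P Q -> w <= thickness n P Q).

Definition constant_width (n : nat) (W : vec -> Prop) (rho : R) : Prop :=
  0 < rho < PI /\ forall P, supports n P W -> width_eq n W P rho.

(* Main.v *)
Require Import Defs.
From Stdlib Require Import Reals Lra Lia Psatz Rtopology FunctionalExtensionality ClassicalEpsilon Classical.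
Open Scope R_scope.

Lemma sumR_ext m f g : (forall i, (i < m)%nat -> f i = g i) -> sumR m f = sumR m g.
Proof. induction m; simpl; intros H; auto. rewrite IHm by (intros; apply H; lia). rewrite H by lia; auto. Qed.

Lemma sumR_add m f g : sumR m (fun i => f i + g i) = sumR m f + sumR m g.
Proof. induction m; simpl; [lra|]. rewrite IHm; lra. Qed.

Lemma sumR_scal m a f : sumR m (fun i => a * f i) = a * sumR m f.
Proof. induction m; simpl; [lra|]. rewrite IHm; lra. Qed.

Lemma sumR_nonneg m f : (forall i, (i<m)%nat -> 0 <= f i) -> 0 <= sumR m f.
Proof. induction m; simpl; intros H; [lra|]. assert (0 <= f m) by (apply H; lia).
 assert (0 <= sumR m f) by (apply IHm; intros; apply H; lia). lra. Qed.

Lemma sumR_term_le m f i : (forall j, (j<m)%nat -> 0 <= f j) -> (i < m)%nat -> f i <= sumR m f.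
Proof. induction m; simpl; intros H Hi; [lia|].
 assert (0 <= f m) by (apply H; lia).
 assert (0 <= sumR m f) by (apply sumR_nonneg; intros; apply H; lia).
 destruct (Nat.eq_dec i m) as [->|Hne]; [lra|].
 assert (f i <= sumR m f) by (apply IHm; [intros; apply H; lia| lia]). lra. Qed.

Lemma dot_sym n x y : dot n x y = dot n y x.
Proof. unfold dot. apply sumR_ext; intros; ring. Qed.
Lemma dot_add_l n x y z : dot n (vadd x y) z = dot n x z + dot n y z.
Proof. unfold dot, vadd. rewrite <- sumR_add. apply sumR_ext; intros; ring. Qed.
Lemma dot_add_r n x y z : dot n z (vadd x y) = dot n z x + dot n z y.
Proof. unfold dot, vadd. rewrite <- sumR_add. apply sumR_ext; intros; ring. Qed.
Lemma dot_scale_l n a x y : dot n (vscale a x) y = a * dot n x y.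
Proof. unfold dot, vscale. rewrite <- sumR_scal. apply sumR_ext; intros; ring. Qed.
Lemma dot_scale_r n a x y : dot n y (vscale a x) = a * dot n y x.
Proof. unfold dot, vscale. rewrite <- sumR_scal. apply sumR_ext; intros; ring. Qed.
Lemma dot_opp_l n x y : dot n (vopp x) y = - dot n x y.
Proof. unfold dot, vopp. replace (- sumR _ _) with ((-1) * sumR (S (S n)) (fun i => x i * y i)) by ring.
 rewrite <- sumR_scal. apply sumR_ext; intros; ring. Qed.
Lemma dot_opp_r n x y : dot n y (vopp x) = - dot n y x.
Proof. rewrite dot_sym, dot_opp_l, dot_sym; auto. Qed.
Lemma dot_nonneg n x : 0 <= dot n x x.
Proof. unfold dot. apply sumR_nonneg. intros; nra. Qed.

Ltac dsimpl := repeat (rewrite ?dot_add_l, ?dot_add_r, ?dot_scale_l, ?dot_scale_r, ?dot_opp_l, ?dot_opp_r).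
Ltac dsimplin H := repeat (rewrite ?dot_add_l, ?dot_add_r, ?dot_scale_l, ?dot_scale_r, ?dot_opp_l, ?dot_opp_r in H).

Lemma CS n x y : (dot n x y)^2 <= dot n x x * dot n y y.
Proof.
  assert (H : forall t, 0 <= dot n x x - 2 * t * dot n x y + t^2 * dot n y y).
  { intros t. pose proof (dot_nonneg n (vadd x (vscale (-t) y))) as H. dsimplin H.
    rewrite (dot_sym n y x) in H. nra. }
  set (a := dot n y y) in *. set (b := dot n x y) in *. set (c := dot n x x) in *.
  assert (Ha : 0 <= a) by apply dot_nonneg.
  destruct (Req_dec a 0) as [Ha0|Ha0].
  - destruct (Req_dec b 0) as [Hb0|Hb0]. { rewrite Hb0, Ha0; nra. }
    specialize (H ((c+1)/(2*b))). rewrite Ha0 in H.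
    replace (c - 2 * ((c + 1) / (2 * b)) * b + ((c + 1) / (2 * b)) ^ 2 * 0) with (-1) in H by (field; auto). lra.
  - specialize (H (b/a)).
    replace (c - 2 * (b / a) * b + (b / a) ^ 2 * a) with ((c*a - b^2)/a) in H by (field; auto).
    assert (0 < a) by lra.
    assert (0 <= c*a - b^2).
    { destruct (Rle_or_lt 0 (c*a - b^2)); auto. exfalso.
      assert ((c*a-b^2)/a < 0). { unfold Rdiv. apply Rmult_neg_pos; auto. apply Rinv_0_lt_compat; auto. } lra. }
    nra.
Qed.

Lemma dot_sphere_bound n x y : sphere n x -> sphere n y -> -1 <= dot n x y <= 1.
Proof. intros [_ Hx] [_ Hy]. pose proof (CS n x y). rewrite Hx, Hy in H. nra. Qed.

Lemma dot_lip n P X Y : sphere n P -> Rabs (dot n P X - dot n P Y) <= vdist n X Y.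
Proof.
  intros [_ HP]. unfold vdist, vnorm.
  replace (dot n P X - dot n P Y) with (dot n P (vadd X (vopp Y))) by (dsimpl; ring).
  pose proof (CS n P (vadd X (vopp Y))) as H. rewrite HP in H.
  rewrite <- sqrt_Rsqr_abs. apply sqrt_le_1. apply Rle_0_sqr. apply dot_nonneg.
  unfold Rsqr. lra.
Qed.

Lemma Rabs_le_b x e : Rabs x <= e -> -e <= x <= e.
Proof. unfold Rabs; destruct (Rcase_abs x); intros; lra. Qed.

Definition zb n (v : vec) := forall i, (S (S n) <= i)%nat -> v i = 0.

Lemma zb_add n x y : zb n x -> zb n y -> zb n (vadd x y).
Proof. unfold zb, vadd; intros Hx Hy i Hi; rewrite Hx, Hy; auto; ring. Qed.
Lemma zb_scale n a x : zb n x -> zb n (vscale a x).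
Proof. unfold zb, vscale; intros Hx i Hi; rewrite Hx; auto; ring. Qed.
Lemma zb_opp n x : zb n x -> zb n (vopp x).
Proof. unfold zb, vopp; intros Hx i Hi; rewrite Hx; auto; ring. Qed.

Lemma nrm_sphere n v : zb n v -> 0 < dot n v v -> sphere n (vscale (/ vnorm n v) v).
Proof.
  intros Hz Hp. split. apply zb_scale; auto.
  dsimpl. unfold vnorm. pose proof (sqrt_sqrt (dot n v v)) as Hs.
  pose proof (sqrt_lt_R0 _ Hp). field_simplify; [|lra]. rewrite <- Hs at 1 by lra. field. lra. Qed.

Lemma vnorm_pos n v : 0 < dot n v v -> 0 < vnorm n v.
Proof. intros; unfold vnorm; apply sqrt_lt_R0; auto. Qed.

Lemma vnorm_sq n v : vnorm n v * vnorm n v = dot n v v.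
Proof. unfold vnorm; apply sqrt_sqrt, dot_nonneg. Qed.

Lemma vdist_self n X : vdist n X X = 0.
Proof. unfold vdist, vnorm. replace (dot n (vadd X (vopp X)) (vadd X (vopp X))) with 0.
 apply sqrt_0. dsimpl. ring. Qed.

Lemma perturb n P X eps : sphere n P -> sphere n X -> dot n P X = 0 -> eps > 0 ->
  exists Y, sphere n Y /\ vdist n Y X < eps /\ dot n P Y < 0.
Proof.
  intros HP HX HPX He. destruct HP as [zP dP]. destruct HX as [zX dX].
  assert (HPX' : dot n X P = 0) by (rewrite dot_sym; auto).
  set (d := eps/2). set (v := vadd X (vscale (-d) P)).
  assert (Hvv : dot n v v = 1 + d^2).
  { unfold v; dsimpl. rewrite (dot_sym n X P), HPX, dP, dX. ring. }
  assert (Hzv : zb n v) by (apply zb_add; auto; apply zb_scale; auto).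
  assert (Hd : 0 < d) by (unfold d; lra).
  assert (Hpos : 0 < dot n v v) by nra.
  set (s := vnorm n v). assert (Hs : 0 < s) by (apply vnorm_pos; auto).
  assert (Hss : s * s = 1 + d^2) by (unfold s; rewrite vnorm_sq; auto).
  exists (vscale (/ s) v). split; [apply nrm_sphere; auto|]. split.
  - unfold vdist, vnorm.
    assert (E : dot n (vadd (vscale (/ s) v) (vopp X)) (vadd (vscale (/ s) v) (vopp X)) = 2 - 2 / s).
    { dsimpl. rewrite Hvv. unfold v. dsimpl. rewrite ?(dot_sym n P X), ?HPX', ?dX.
      rewrite <- Hss. field. lra. }
    rewrite E. assert (s >= 1) by nra.
    assert (H2 : 2 - 2/s <= d^2).
    { assert (2*s - 2 <= d^2 * s) by nra.
      apply (Rmult_le_reg_r s); auto. field_simplify; lra. }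
    assert (0 <= 2 - 2/s). { assert (/ s <= 1). { rewrite <- Rinv_1. apply Rinv_le_contravar; lra. } unfold Rdiv; lra. }
    rewrite <- (sqrt_Rsqr eps) by lra. apply sqrt_lt_1; auto. apply Rle_0_sqr.
    unfold Rsqr, d in *. nra.
  - dsimpl. unfold v. dsimpl. rewrite HPX, dP.
    assert (0 < / s) by (apply Rinv_0_lt_compat; auto). nra.
Qed.

Lemma bd_mem n A X : sph_closed n A -> sph_boundary n A X -> A X.
Proof.
  intros Hc [HX Hb]. apply NNPP; intro HnA.
  destruct (Hc X HX HnA) as [e [He HH]].
  destruct (Hb e He) as [[Y [HY [Hd HAY]]] _]. apply (HH Y HY Hd HAY).
Qed.

Lemma vdist_sym n X Y : vdist n X Y = vdist n Y X.
Proof. unfold vdist, vnorm. f_equal. dsimpl. ring_simplify. rewrite (dot_sym n X Y). ring. Qed.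

Lemma bd_hemi n P X : sphere n P -> sph_boundary n (hemi n P) X -> dot n P X = 0.
Proof.
  intros HP [HX Hb].
  destruct (Rtotal_order (dot n P X) 0) as [Hl|[He|Hg]]; auto; exfalso.
  - destruct (Hb (- dot n P X) ltac:(lra)) as [[Y [HY [Hd [_ HPY]]]] _].
    pose proof (dot_lip n P X Y HP). rewrite vdist_sym in Hd.
    apply Rabs_le_b in H. lra.
  - destruct (Hb (dot n P X) ltac:(lra)) as [_ [Y [HY [Hd HnY]]]].
    apply HnY. split; auto.
    pose proof (dot_lip n P X Y HP). rewrite vdist_sym in Hd. apply Rabs_le_b in H. lra.
Qed.

Definition polarD := polar.

Lemma supports_elim n P W : sph_closed n W -> supports n P W ->
  sphere n P /\ (forall X, W X -> sphere n X /\ dot n P X >= 0) /\ exists X, W X /\ dot n P X = 0.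
Proof.
  intros Hc [HP [Hsub [X [HbW HbH]]]]. split; auto. split; [intros Y HY; apply Hsub; auto|].
  exists X. split. apply (bd_mem n W X Hc HbW). apply (bd_hemi n P X HP HbH).
Qed.

Lemma supports_intro n P W X : sphere n P -> (forall Y, W Y -> hemi n P Y) ->
  W X -> sphere n X -> dot n P X = 0 -> supports n P W.
Proof.
  intros HP Hsub HWX HX HPX. split; auto. split; auto. exists X. split.
  - split; auto. intros e He. split.
    + exists X. split; [exact HX| split; [rewrite vdist_self; lra| exact HWX]].
    + destruct (perturb n P X e HP HX HPX He) as [Y [HY [Hd HPY]]].
      exists Y. split; [exact HY| split; [exact Hd|]]. intro HWY. destruct (Hsub Y HWY). lra.
  - split; auto. intros e He. split.
    + exists X. split; [exact HX| split; [rewrite vdist_self; lra| split; [exact HX|lra]]].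
    + destruct (perturb n P X e HP HX HPX He) as [Y [HY [Hd HPY]]].
      exists Y. split; [exact HY| split; [exact Hd|]]. intros [_ H]. lra.
Qed.

Lemma acos_le_half x : 0 <= x <= 1 -> acos x <= PI/2.
Proof.
  intros Hx. destruct (Rle_or_lt (acos x) (PI/2)); auto. exfalso.
  pose proof (acos_bound x). pose proof PI_RGT_0.
  assert (cos (acos x) < 0) by (apply cos_lt_0; lra). rewrite cos_acos in H2 by lra. lra.
Qed.

Lemma acos_le_half_inv x : -1 <= x <= 1 -> acos x <= PI/2 -> 0 <= x.
Proof.
  intros Hx Ha. rewrite <- (cos_acos x Hx). pose proof (acos_bound x). apply cos_ge_0; lra.
Qed.

Lemma acos_half_inv x : -1 <= x <= 1 -> acos x = PI/2 -> x = 0.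
Proof. intros Hx Ha. rewrite <- (cos_acos x Hx), Ha. apply cos_PI2. Qed.

Lemma forward n W : convex_body n W -> (forall Q, W Q <-> polar n W Q) -> constant_width n W (PI / 2).
Proof.
  intros [Hsph [Hc _]] HWP. pose proof PI_RGT_0.
  assert (Hin : forall P, supports n P W -> W P).
  { intros P Hs. destruct (supports_elim n P W Hc Hs) as [HP [Hsub _]].
    apply HWP. split; auto. intros Z HZ. destruct (Hsub Z HZ). split; auto. rewrite dot_sym; auto. }
  split; [lra|]. intros P Hs.
  destruct (supports_elim n P W Hc Hs) as [HP [Hsub [X [HWX HPX]]]].
  pose proof (Hin P Hs) as HWP'. split.
  - exists X. split.
    + split; [|split; [|split]].
      * apply (supports_intro n X W P); auto.
        intros Y HY. destruct (proj1 (HWP X) HWX) as [_ HH]. destruct (HH Y HY) as [HX' HYX].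
        split; auto. rewrite dot_sym; auto. all: try (rewrite dot_sym; auto).
      * intro E. subst X. destruct HP as [_ HPP]. lra.
      * intro E. subst X. rewrite dot_opp_r in HPX. destruct HP as [_ HPP]. lra.
      * intros Y HY. destruct (Hsub Y HY) as [HY1 HY2]. split; [split; auto| split; auto].
        destruct (proj1 (HWP Y) HY) as [_ HH]. destruct (HH X HWX) as [_ HH2]. exact HH2.
    + unfold thickness, sdist. rewrite HPX, acos_0. field.
  - intros Q [HQs _]. pose proof (Hin Q HQs) as HWQ.
    destruct (proj1 (HWP Q) HWQ) as [HQ HH]. destruct (HH P HWP') as [_ HPQ].
    pose proof (dot_sphere_bound n P Q HP HQ).
    unfold thickness, sdist. pose proof (acos_le_half (dot n P Q) ltac:(lra)). lra.
Qed.

Definition strict (phi : nat -> nat) := forall j, (phi j < phi (S j))%nat.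

Lemma strict_lt phi : strict phi -> forall i j, (i < j)%nat -> (phi i < phi j)%nat.
Proof. intros H i j Hij. induction j; [lia|]. destruct (Nat.eq_dec i j) as [->|]; [apply H|].
  specialize (IHj ltac:(lia)). specialize (H j). lia. Qed.

Lemma strict_ge phi : strict phi -> forall j, (j <= phi j)%nat.
Proof. intros H j; induction j; [lia|]. specialize (H j); lia. Qed.

Lemma inv_small j : 0 < / (INR j + 1).
Proof. apply Rinv_0_lt_compat. pose proof (pos_INR j). lra. Qed.

Lemma cv_of_bound a l : (forall j, Rabs (a j - l) <= / (INR j + 1)) -> Un_cv a l.
Proof.
  intros H eps He. destruct (archimed_cor1 eps He) as [N [HN HN0]].
  exists N. intros j Hj. unfold Rdist. eapply Rle_lt_trans; [apply H|].
  eapply Rle_lt_trans; [|apply HN]. apply Rinv_le_contravar.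
  apply lt_0_INR; auto. apply le_INR in Hj. lra.
Qed.

Lemma BW1 (u : nat -> R) : (forall j, -1 <= u j <= 1) ->
  exists phi l, strict phi /\ Un_cv (fun j => u (phi j)) l.
Proof.
  intros Hu.
  destruct (Bolzano_Weierstrass u (fun c => -1 <= c <= 1) (compact_P3 _ _) Hu) as [l Hl].
  assert (G : forall N k, {p | (N <= p)%nat /\ Rabs (u p - l) < / (INR k + 1)}).
  { intros N k. apply constructive_indefinite_description.
    destruct (Hl (disc l (mkposreal _ (inv_small k))) N) as [p [Hp Hd]].
    { exists (mkposreal _ (inv_small k)). intros y Hy; exact Hy. }
    exists p. split; auto. }
  set (phi := fix f (j : nat) : nat := match j with O => proj1_sig (G O O) | S j' => proj1_sig (G (S (f j')) (S j')) end).
  exists phi, l. split.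
  - intros j. change (phi (S j)) with (proj1_sig (G (S (phi j)) (S j))).
    pose proof (proj2_sig (G (S (phi j)) (S j))) as [Hp _]. lia.
  - apply cv_of_bound. intros j. destruct j.
    + change (phi O) with (proj1_sig (G O O)). pose proof (proj2_sig (G O O)) as [_ Hp]. lra.
    + change (phi (S j)) with (proj1_sig (G (S (phi j)) (S j))).
      pose proof (proj2_sig (G (S (phi j)) (S j))) as [_ Hp]. lra.
Qed.

Lemma subseq_cv psi a l : strict psi -> Un_cv a l -> Un_cv (fun j => a (psi j)) l.
Proof.
  intros Hs H eps He. destruct (H eps He) as [N HN]. exists N. intros j Hj.
  apply HN. pose proof (strict_ge psi Hs j). lia.
Qed.

Lemma BWN k : forall (u : nat -> vec), (forall j i, -1 <= u j i <= 1) ->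
  exists phi l, strict phi /\ forall i, (i < k)%nat -> Un_cv (fun j => u (phi j) i) (l i).
Proof.
  induction k; intros u Hu.
  - exists (fun j => j), (fun _ => 0). split; [intros j; lia| intros; lia].
  - destruct (IHk u Hu) as [phi [l [Hs Hc]]].
    destruct (BW1 (fun j => u (phi j) k) (fun j => Hu _ _)) as [psi [l' [Hs' Hc']]].
    exists (fun j => phi (psi j)), (fun i => if Nat.eq_dec i k then l' else l i). split.
    + intros j. apply strict_lt; auto.
    + intros i Hi. destruct (Nat.eq_dec i k) as [->|Hne].
      * exact Hc'.
      * apply (subseq_cv psi (fun j => u (phi j) i)); auto. apply Hc; lia.
Qed.

Lemma cv_const c : Un_cv (fun _ => c) c.
Proof. intros eps He. exists O. intros. unfold Rdist. rewrite Rminus_diag, Rabs_R0. lra. Qed.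

Lemma cv_sum m (a b : nat -> vec) al be :
  (forall i, (i < m)%nat -> Un_cv (fun j => a j i) (al i)) ->
  (forall i, (i < m)%nat -> Un_cv (fun j => b j i) (be i)) ->
  Un_cv (fun j => sumR m (fun i => a j i * b j i)) (sumR m (fun i => al i * be i)).
Proof.
  induction m; intros Ha Hb.
  - simpl. apply cv_const.
  - simpl. apply CV_plus. apply IHm; intros; [apply Ha|apply Hb]; lia.
    apply CV_mult; [apply Ha|apply Hb]; lia.
Qed.

Lemma sumR_0 m : sumR m (fun _ => 0) = 0.
Proof. induction m; simpl; auto. rewrite IHm; ring. Qed.

Lemma sphere_coord n X i : sphere n X -> -1 <= X i <= 1.
Proof.
  intros [Hz Hd]. destruct (Compare_dec.lt_dec i (S (S n))) as [Hi|Hi].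
  - assert (X i * X i <= 1).
    { rewrite <- Hd. unfold dot. apply (sumR_term_le _ (fun i => X i * X i)); auto.
      intros; nra. }
    nra.
  - rewrite Hz by lia. lra.
Qed.

Lemma ATT n A Y : (forall X, A X -> sphere n X) -> sph_closed n A -> (exists X, A X) ->
  exists X0, A X0 /\ forall X, A X -> dot n Y X <= dot n Y X0.
Proof.
  intros Hs Hc Hne.
  set (E := fun r => exists X, A X /\ r = dot n Y X).
  assert (Hb : bound E).
  { exists (1 + dot n Y Y). intros r [X [HX ->]]. pose proof (CS n Y X).
    destruct (Hs X HX) as [_ HXX]. rewrite HXX in H. pose proof (dot_nonneg n Y). nra. }
  assert (HE : exists r, E r) by (destruct Hne as [X HX]; exists (dot n Y X); exists X; auto).
  destruct (completeness E Hb HE) as [s [Hub Hlub]].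
  assert (Hk : forall k, exists X, A X /\ s - / (INR k + 1) < dot n Y X).
  { intros k. apply NNPP; intro Hn.
    assert (is_upper_bound E (s - / (INR k + 1))).
    { intros r [X [HX ->]]. destruct (Rle_or_lt (dot n Y X) (s - / (INR k + 1))); auto.
      exfalso; apply Hn; exists X; auto. }
    specialize (Hlub _ H). pose proof (inv_small k). lra. }
  set (u := fun k => proj1_sig (constructive_indefinite_description _ (Hk k))).
  assert (Hu : forall k, A (u k) /\ s - / (INR k + 1) < dot n Y (u k)).
  { intros k. unfold u. destruct (constructive_indefinite_description _ (Hk k)); auto. }
  destruct (BWN (S (S n)) u) as [phi [l [Hst Hcv]]].
  { intros j i. apply (sphere_coord n). apply Hs, Hu. }
  set (Xs := fun i => if Compare_dec.lt_dec i (S (S n)) then l i else 0).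
  assert (Hcv' : forall i, (i < S (S n))%nat -> Un_cv (fun j => u (phi j) i) (Xs i)).
  { intros i Hi. unfold Xs. destruct (Compare_dec.lt_dec i (S (S n))); [apply Hcv; auto|lia]. }
  assert (HXs : sphere n Xs).
  { split. intros i Hi. unfold Xs. destruct (Compare_dec.lt_dec i (S (S n))); [lia|auto].
    pose proof (cv_sum _ (fun j => u (phi j)) (fun j => u (phi j)) Xs Xs Hcv' Hcv') as H.
    apply (UL_sequence _ _ _ H). fold (dot n Xs Xs).
    eapply Un_cv_ext; [|apply cv_const]. intros j. simpl. destruct (Hs _ (proj1 (Hu (phi j)))) as [_ Hd].
    unfold dot in Hd. exact (eq_sym Hd). }
  assert (HYs : dot n Y Xs = s).
  { pose proof (cv_sum _ (fun j => Y) (fun j => u (phi j)) Y Xs (fun i _ => cv_const (Y i)) Hcv') as H.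
    apply (UL_sequence _ _ _ H). apply cv_of_bound. intros j.
    destruct (Hu (phi j)) as [HA Hlt]. assert (dot n Y (u (phi j)) <= s) by (apply Hub; exists (u (phi j)); auto).
    change (sumR (S (S n)) (fun i => Y i * u (phi j) i)) with (dot n Y (u (phi j))).
    assert (/ (INR (phi j) + 1) <= / (INR j + 1)).
    { apply Rinv_le_contravar. pose proof (pos_INR j); lra. apply le_INR in H1 || idtac.
      pose proof (le_INR _ _ (strict_ge phi Hst j)). lra. }
    apply Rabs_le. lra. }
  exists Xs. split.
  - apply NNPP; intro HnA. destruct (Hc Xs HXs HnA) as [e [He HH]].
    set (a := fun j i => u (phi j) i + - Xs i).
    assert (Ha : forall i, (i < S (S n))%nat -> Un_cv (fun j => a j i) 0).
    { intros i Hi. unfold a. replace 0 with (Xs i + - Xs i) by ring. apply CV_plus; [apply Hcv'; auto|apply cv_const]. }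
    pose proof (cv_sum _ a a (fun _ => 0) (fun _ => 0) Ha Ha) as H.
    rewrite (sumR_ext _ _ (fun _ => 0)), sumR_0 in H by (intros; ring).
    destruct (H (e * e) ltac:(nra)) as [N HN]. specialize (HN N (le_n N)).
    apply (HH (u (phi N))). apply Hs, Hu.
    unfold vdist, vnorm. rewrite <- (sqrt_Rsqr e) by lra. apply sqrt_lt_1. apply dot_nonneg. apply Rle_0_sqr.
    unfold Rdist in HN. rewrite Rminus_0_r in HN. apply Rabs_lt_between in HN || idtac.
    unfold Rsqr. unfold dot, vadd, vopp. unfold a in HN.
    destruct (Rcase_abs (sumR (S (S n)) (fun i => (u (phi N) i + - Xs i) * (u (phi N) i + - Xs i)))) as [Hl|Hl];
      [rewrite Rabs_left in HN by lra| rewrite Rabs_right in HN by lra]; lra.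
    apply Hu.
  - intros X HX. rewrite HYs. apply Hub. exists X; auto.
Qed.

Lemma polar_iff n W Y : (forall X, W X -> sphere n X) ->
  (polar n W Y <-> sphere n Y /\ forall X, W X -> dot n Y X >= 0).
Proof.
  intros Hs. split.
  - intros [HY H]. split; auto. intros X HX. destruct (H X HX). rewrite dot_sym; auto.
  - intros [HY H]. split; auto. intros X HX. split; auto. rewrite dot_sym; auto.
Qed.

Lemma supp_of_polar n W Y X : (forall X, W X -> sphere n X) ->
  polar n W Y -> W X -> dot n Y X = 0 -> supports n Y W.
Proof.
  intros Hs HY HX H0. apply polar_iff in HY; auto. destruct HY as [HY HH].
  apply (supports_intro n Y W X); auto. intros Z HZ. split; auto.
Qed.

Lemma polar_of_supp n W P : (forall X, W X -> sphere n X) -> sph_closed n W ->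
  supports n P W -> polar n W P.
Proof.
  intros Hs Hc HP. destruct (supports_elim n P W Hc HP) as [HP1 [HP2 _]].
  apply polar_iff; auto. split; auto. intros X HX; apply HP2; auto.
Qed.

Lemma INT n W P C : (forall X, W X -> sphere n X) -> sph_interior n W C ->
  polar n W P -> 0 < dot n P C.
Proof.
  intros Hs [HC [e [He HH]]] HP. apply polar_iff in HP; auto. destruct HP as [HP HP2].
  assert (HWC : W C) by (apply HH; auto; rewrite vdist_self; lra).
  pose proof (HP2 C HWC).
  destruct (Req_dec (dot n P C) 0) as [E|E]; [|lra]. exfalso.
  destruct (perturb n P C e HP HC E He) as [Y [HY [Hd HPY]]].
  pose proof (HP2 Y (HH Y HY Hd)). lra.
Qed.

Lemma nrm_dot n v X : dot n (vscale (/ vnorm n v) v) X = dot n v X / vnorm n v.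
Proof. rewrite dot_scale_l. unfold Rdiv. ring. Qed.

Lemma nrm_dot_r n v X : dot n X (vscale (/ vnorm n v) v) = dot n X v / vnorm n v.
Proof. rewrite dot_scale_r. unfold Rdiv. ring. Qed.

Lemma Sep n W Y : convex_body n W -> sphere n Y -> ~ W Y ->
  exists P, polar n W P /\ dot n P Y < 0.
Proof.
  intros [Hs [Hc [[P0 [HP0 Hh]] [[C HC] Hconv]]]] HY HnY.
  assert (HWC : W C) by (destruct HC as [HC [e [He HH]]]; apply HH; auto; rewrite vdist_self; lra).
  destruct (ATT n W Y Hs Hc (ex_intro _ C HWC)) as [X0 [HX0 Hmax]].
  set (m := dot n Y X0).
  destruct (Rle_or_lt m 0) as [Hm|Hm].
  - exists (vopp Y). split.
    + apply polar_iff; auto. split.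
      * destruct HY as [Hz Hd]. split. apply zb_opp; auto. dsimpl. lra.
      * intros X HX. rewrite dot_opp_l. pose proof (Hmax X HX). fold m in H. lra.
    + rewrite dot_opp_l. destruct HY as [_ Hd]. lra.
  - pose proof (Hs X0 HX0) as HX0s.
    pose proof (dot_sphere_bound n Y X0 HY HX0s) as Hb. fold m in Hb.
    assert (Hm1 : m < 1).
    { destruct (Rle_or_lt 1 m) as [H1|H1]; auto. exfalso.
      destruct (Hc Y HY HnY) as [e [He HH]]. apply (HH X0 HX0s); auto.
      unfold vdist, vnorm.
      replace (dot n (vadd X0 (vopp Y)) (vadd X0 (vopp Y))) with 0. rewrite sqrt_0; auto.
      dsimpl. destruct HY as [_ HYY]. destruct HX0s as [_ HXX]. rewrite (dot_sym n X0 Y). fold m.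
      replace m with 1 by lra. lra. }
    assert (Hvar : forall X, W X -> dot n Y X <= m * dot n X0 X).
    { intros X HX. apply Rnot_lt_le. intro Hlt.
      pose proof (Hs X HX) as HXs.
      set (a := dot n Y X) in *. set (c := dot n X0 X) in *.
      pose proof (dot_sphere_bound n X0 X HX0s HXs) as Hc'. fold c in Hc'.
      pose proof (dot_sphere_bound n Y X HY HXs) as Ha'. fold a in Ha'.
      set (k := m * (a - m * c)).
      assert (Hk : 0 < k) by (unfold k; apply Rmult_lt_0_compat; lra).
      set (t := Rmin (1/4) (k/2)).
      assert (Ht0 : 0 < t) by (unfold t; apply Rmin_glb_lt; lra).
      assert (Ht1 : t <= 1/4) by (unfold t; apply Rmin_l).
      assert (Ht2 : t <= k/2) by (unfold t; apply Rmin_r).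
      set (u := vadd (vscale (1 - t) X0) (vscale t X)).
      assert (Huu : dot n u u = (1-t)^2 + 2*t*(1-t)*c + t^2).
      { unfold u. dsimpl. destruct HX0s as [_ H1]. destruct HXs as [_ H2]. rewrite H1, H2.
        rewrite (dot_sym n X X0). fold c. ring. }
      assert (Hupos : 0 < dot n u u).
      { rewrite Huu. assert (0 <= t*(1-t)*(c+1)) by (apply Rmult_le_pos; nra). nra. }
      assert (HWZ : W (arc_point n X0 X t)).
      { apply (Hconv X0 X HX0 HX). exists t. split; [lra|auto]. }
      pose proof (Hmax _ HWZ) as HZ. fold m in HZ. unfold arc_point in HZ. fold u in HZ.
      rewrite nrm_dot_r in HZ.
      pose proof (vnorm_pos n u Hupos) as Hr. pose proof (vnorm_sq n u) as Hr2.
      set (r := vnorm n u) in *.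
      assert (HYu : dot n Y u = (1-t)*m + t*a) by (unfold u; dsimpl; fold m a; ring).
      rewrite HYu in HZ.
      assert (HZ' : (1-t)*m + t*a <= m * r).
      { apply (Rmult_le_reg_r (/ r)). apply Rinv_0_lt_compat; auto.
        replace (m * r * / r) with m by (field; lra). exact HZ. }
      assert (Ham : a > -m) by nra.
      assert (Hpos : 0 < (1-t)*m + t*a) by nra.
      assert (Hsq : ((1-t)*m + t*a)^2 <= m^2 * r^2).
      { replace (m^2 * r^2) with ((m*r)^2) by ring. apply pow_incr; lra. }
      replace (r^2) with (r*r) in Hsq by ring. rewrite Hr2, Huu in Hsq.
      assert (Hx : 2*t*(1-t)*k + t^2*(a^2 - m^2) <= 0) by (unfold k; nra).
      assert (Hx2 : 2*(1-t)*k <= t).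
      { assert (a^2 - m^2 >= -1) by nra.
        assert (t * (2*(1-t)*k - t) <= 0) by nra. nra. }
      assert (t * k <= k/4) by nra. lra. }
    set (w := vadd (vscale m X0) (vopp Y)).
    assert (Hww : dot n w w = 1 - m^2).
    { unfold w. dsimpl. destruct HY as [_ H1]. destruct HX0s as [_ H2]. rewrite H1, H2.
      rewrite (dot_sym n X0 Y). fold m. ring. }
    assert (Hwpos : 0 < dot n w w) by (rewrite Hww; nra).
    pose proof (vnorm_pos n w Hwpos) as Hr.
    exists (vscale (/ vnorm n w) w). split.
    + apply polar_iff; auto. split.
      * apply nrm_sphere; auto. apply zb_add; [apply zb_scale; exact (proj1 HX0s) | apply zb_opp; exact (proj1 HY)].
      * intros X HX. rewrite nrm_dot. unfold w. dsimpl. pose proof (Hvar X HX).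
        unfold Rdiv. apply Rle_ge. apply Rmult_le_pos; [lra|]. left; apply Rinv_0_lt_compat; auto.
    + rewrite nrm_dot. unfold w. dsimpl. rewrite (dot_sym n X0 Y). fold m. destruct HY as [_ HYY].
      rewrite HYY. unfold Rdiv. apply Rmult_neg_pos; [nra|]. apply Rinv_0_lt_compat; auto.
Qed.

Lemma lub_in (T : R -> Prop) s b : is_lub T s -> b < s -> exists t, T t /\ b < t.
Proof.
  intros [Hub Hlub] Hb. apply NNPP; intro Hn.
  assert (is_upper_bound T b).
  { intros t Ht. destruct (Rle_or_lt t b); auto. exfalso; apply Hn; exists t; auto. }
  specialize (Hlub _ H). lra.
Qed.

Lemma PUSH n W P Y : convex_body n W -> polar n W P -> polar n W Y -> dot n P Y < 0 ->
  exists Y', supports n Y' W /\ dot n P Y' < 0.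
Proof.
  intros HW HP HY HPY. pose proof HW as [Hs [Hc [_ [[C HC] _]]]].
  assert (HWC : W C) by (destruct HC as [HC' [e [He HH]]]; apply HH; auto; rewrite vdist_self; lra).
  pose proof (INT n W P C Hs HC HP) as HPC.
  apply polar_iff in HP; auto. destruct HP as [HPs HP].
  apply polar_iff in HY; auto. destruct HY as [HYs HY].
  set (T := fun t => 0 <= t /\ forall X, W X -> t * dot n P X <= dot n Y X).
  assert (Hb : bound T).
  { exists (dot n Y C / dot n P C). intros t [Ht HX]. specialize (HX C HWC).
    apply (Rmult_le_reg_r (dot n P C)); auto. unfold Rdiv. rewrite Rmult_assoc, Rinv_l by lra. lra. }
  assert (H0 : T 0). { split; [lra|]. intros X HX. specialize (HY X HX). lra. }
  destruct (completeness T Hb (ex_intro _ 0 H0)) as [ts Hts].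
  assert (Hts0 : 0 <= ts) by (apply (proj1 Hts); auto).
  assert (HtsT : forall X, W X -> ts * dot n P X <= dot n Y X).
  { intros X HX. apply Rnot_lt_le. intro Hlt.
    pose proof (HP X HX). pose proof (HY X HX).
    assert (Hpx : 0 < dot n P X) by nra.
    destruct (lub_in T ts (dot n Y X / dot n P X) Hts) as [t [[Ht HtX] Hlt2]].
    { apply (Rmult_lt_reg_r (dot n P X)); auto. unfold Rdiv. rewrite Rmult_assoc, Rinv_l by lra. lra. }
    specialize (HtX X HX).
    assert (dot n Y X < t * dot n P X).
    { apply (Rmult_lt_compat_r (dot n P X)) in Hlt2; auto. unfold Rdiv in Hlt2.
      rewrite Rmult_assoc, Rinv_l in Hlt2 by lra. lra. }
    lra. }
  set (v := vadd Y (vscale (- ts) P)).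
  assert (Hvv : dot n v v = 1 - 2 * ts * dot n P Y + ts^2).
  { unfold v. dsimpl. rewrite (proj2 HYs), (proj2 HPs), (dot_sym n Y P). ring. }
  assert (Hvpos : 0 < dot n v v) by (rewrite Hvv; nra).
  assert (Hzv : zb n v) by (apply zb_add; [exact (proj1 HYs)| apply zb_scale; exact (proj1 HPs)]).
  destruct (ATT n W (vopp v) Hs Hc (ex_intro _ C HWC)) as [X1 [HX1 Hmin]].
  assert (Hvx : forall X, W X -> dot n v X = dot n Y X - ts * dot n P X) by (intros; unfold v; dsimpl; ring).
  assert (Hmu : dot n v X1 = 0).
  { rewrite Hvx by auto. pose proof (HtsT X1 HX1).
    destruct (Rle_or_lt (dot n Y X1 - ts * dot n P X1) 0) as [Hl|Hl]; [lra|exfalso].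
    set (mu := dot n Y X1 - ts * dot n P X1) in *.
    assert (T (ts + mu)).
    { split; [lra|]. intros X HX. pose proof (Hmin X HX) as HM. rewrite !dot_opp_l in HM.
      rewrite !Hvx in HM by auto. fold mu in HM.
      pose proof (dot_sphere_bound n P X HPs (Hs X HX)). pose proof (HP X HX). nra. }
    pose proof (proj1 Hts _ H1). lra. }
  pose proof (vnorm_pos n v Hvpos) as Hr.
  exists (vscale (/ vnorm n v) v). split.
  - apply (supp_of_polar n W _ X1); auto.
    + apply polar_iff; auto. split. apply nrm_sphere; auto.
      intros X HX. rewrite nrm_dot. rewrite Hvx by auto. pose proof (HtsT X HX).
      unfold Rdiv. apply Rle_ge. apply Rmult_le_pos; [lra|]. left; apply Rinv_0_lt_compat; auto.
    + rewrite nrm_dot, Hmu. unfold Rdiv; ring.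
  - rewrite nrm_dot_r. unfold v. dsimpl. rewrite (proj2 HPs).
    unfold Rdiv. apply Rmult_neg_pos; [nra|]. apply Rinv_0_lt_compat; auto.
Qed.

Lemma backward n W : convex_body n W -> constant_width n W (PI / 2) -> forall Q, W Q <-> polar n W Q.
Proof.
  intros HW [_ Hw]. pose proof HW as [Hs [Hc [[P0 [HP0 Hh]] [[C HC] Hconv]]]].
  assert (HWC : W C) by (destruct HC as [HC' [e [He HH]]]; apply HH; auto; rewrite vdist_self; lra).
  assert (Hsub : forall P X, supports n P W -> W X -> hemi n P X).
  { intros P X HP HX. destruct (supports_elim n P W Hc HP) as [_ [H _]]. destruct (H X HX); split; auto. }
  assert (Ha : forall P Q, supports n P W -> supports n Q W -> Q <> P -> Q <> vopp P -> 0 <= dot n P Q).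
  { intros P Q HP HQ H1 H2. destruct (Hw P HP) as [_ Hmin].
    assert (Hcand : width_cand n W P Q).
    { refine (conj HQ (conj H1 (conj H2 _))). intros X HX; split; apply Hsub; auto. }
    specialize (Hmin Q Hcand). unfold thickness, sdist in Hmin.
    apply acos_le_half_inv; [|lra].
    apply dot_sphere_bound; [exact (proj1 (supports_elim n P W Hc HP))| exact (proj1 (supports_elim n Q W Hc HQ))]. }
  assert (Hb : forall P, supports n P W -> exists Q, supports n Q W /\ dot n P Q = 0).
  { intros P HP. destruct (Hw P HP) as [[Q [[HQ _] Ht]] _]. exists Q. split; auto.
    unfold thickness, sdist in Ht. apply acos_half_inv; [|lra].
    apply dot_sphere_bound; [exact (proj1 (supports_elim n P W Hc HP))| exact (proj1 (supports_elim n Q W Hc HQ))]. }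
  assert (Hi : forall Y, polar n W Y -> W Y).
  { intros Y HY. apply NNPP; intro HnY.
    destruct (Sep n W Y HW (proj1 HY) HnY) as [P [HP HPY]].
    destruct (PUSH n W P Y HW HP HY HPY) as [Y1 [HY1 HPY1]].
    pose proof (polar_of_supp n W Y1 Hs Hc HY1) as HY1p.
    destruct (PUSH n W Y1 P HW HY1p HP ltac:(rewrite dot_sym; auto)) as [P1 [HP1 HYP1]].
    pose proof (polar_of_supp n W P1 Hs Hc HP1) as HP1p.
    assert (HY1s : sphere n Y1) by apply HY1p.
    assert (0 <= dot n Y1 P1); [|lra].
    apply Ha; auto.
    - intro E. subst P1. destruct HY1s as [_ Hd]. lra.
    - intro E. pose proof (INT n W P1 C Hs HC HP1p). pose proof (INT n W Y1 C Hs HC HY1p).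
      rewrite E, dot_opp_l in H. lra. }
  intros Q. split; [|apply Hi]. intros HZ. apply NNPP; intro HnZ.
  set (C0 := vopp P0).
  assert (HC0 : forall X, W X -> 0 < dot n C0 X).
  { intros X HX. unfold C0. rewrite dot_opp_l. destruct (Rlt_or_le (dot n P0 X) 0); [lra|].
    exfalso. apply (Hh X HX). split; auto. lra. }
  set (T := fun t => 0 <= t <= 1 /\ forall X, W X -> 0 <= (1-t) * dot n C0 X + t * dot n Q X).
  assert (HT0 : T 0). { split; [lra|]. intros X HX. specialize (HC0 X HX). lra. }
  assert (Hbd : bound T) by (exists 1; intros t [Ht _]; lra).
  destruct (completeness T Hbd (ex_intro _ 0 HT0)) as [ts Hts].
  assert (Hts0 : 0 <= ts) by (apply (proj1 Hts); auto).
  assert (Hts1 : ts <= 1) by (apply (proj2 Hts); intros t [Ht _]; lra).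
  pose proof (Hs Q HZ) as HQs. pose proof (Hs C HWC) as HCs.
  assert (HC0s : sphere n C0) by (split; [apply zb_opp; exact (proj1 HP0)| unfold C0; dsimpl; rewrite (proj2 HP0); ring]).
  assert (HtsT : forall X, W X -> 0 <= (1-ts) * dot n C0 X + ts * dot n Q X).
  { intros X HX. apply Rnot_lt_le. intro Hlt. pose proof (HC0 X HX) as Hal.
    set (al := dot n C0 X) in *. set (be := dot n Q X) in *.
    assert (Hsl : be - al < 0) by nra.
    destruct (lub_in T ts (al / (al - be)) Hts) as [t [[Ht HtX] Hlt2]].
    { apply (Rmult_lt_reg_r (al - be)); [lra|]. unfold Rdiv. rewrite Rmult_assoc, Rinv_l by lra. nra. }
    specialize (HtX X HX). fold al be in HtX.
    assert (al < t * (al - be)).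
    { apply (Rmult_lt_compat_r (al - be)) in Hlt2; [|lra]. unfold Rdiv in Hlt2.
      rewrite Rmult_assoc, Rinv_l in Hlt2 by lra. lra. }
    nra. }
  assert (Hts1' : ts < 1).
  { destruct (Rlt_or_le ts 1); auto. exfalso. apply HnZ. apply polar_iff; auto. split; auto.
    intros X HX. specialize (HtsT X HX). replace ts with 1 in HtsT by lra. lra. }
  set (u := vadd (vscale (1 - ts) C0) (vscale ts Q)).
  assert (Hux : forall X, dot n u X = (1-ts) * dot n C0 X + ts * dot n Q X) by (intros; unfold u; dsimpl; ring).
  assert (Huu : dot n u u = (1-ts)^2 + 2*ts*(1-ts)*dot n C0 Q + ts^2).
  { unfold u. dsimpl. rewrite (proj2 HC0s), (proj2 HQs), (dot_sym n Q C0). ring. }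
  assert (Hupos : 0 < dot n u u).
  { rewrite Huu. pose proof (HC0 Q HZ). assert (0 <= ts*(1-ts)*dot n C0 Q) by (apply Rmult_le_pos; nra). nra. }
  assert (Hzu : zb n u) by (apply zb_add; apply zb_scale; [exact (proj1 HC0s)|exact (proj1 HQs)]).
  destruct (ATT n W (vopp u) Hs Hc (ex_intro _ C HWC)) as [X1 [HX1 Hmin]].
  assert (Hmu : dot n u X1 = 0).
  { pose proof (HtsT X1 HX1) as H1. rewrite <- Hux in H1.
    destruct (Rle_or_lt (dot n u X1) 0) as [Hl|Hl]; [lra|exfalso].
    set (mu := dot n u X1) in *.
    set (eps := Rmin (mu/2) (1 - ts)).
    assert (He0 : 0 < eps) by (unfold eps; apply Rmin_glb_lt; lra).
    assert (He1 : eps <= mu/2) by apply Rmin_l.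
    assert (He2 : eps <= 1 - ts) by apply Rmin_r.
    assert (T (ts + eps)).
    { split; [lra|]. intros X HX. pose proof (Hmin X HX) as HM. rewrite !dot_opp_l in HM.
      fold mu in HM. rewrite Hux in HM.
      pose proof (dot_sphere_bound n C0 X HC0s (Hs X HX)). pose proof (dot_sphere_bound n Q X HQs (Hs X HX)). nra. }
    pose proof (proj1 Hts _ H). lra. }
  pose proof (vnorm_pos n u Hupos) as Hr.
  set (P := vscale (/ vnorm n u) u).
  assert (HPp : polar n W P).
  { apply polar_iff; auto. split. apply nrm_sphere; auto.
    intros X HX. unfold P. rewrite nrm_dot. rewrite Hux. pose proof (HtsT X HX).
    unfold Rdiv. apply Rle_ge. apply Rmult_le_pos; [lra|]. left; apply Rinv_0_lt_compat; auto. }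
  assert (HPs : supports n P W).
  { apply (supp_of_polar n W _ X1); auto. unfold P. rewrite nrm_dot, Hmu. unfold Rdiv; ring. }
  destruct (Hb P HPs) as [Q1 [HQ1 HPQ1]].
  pose proof (polar_of_supp n W Q1 Hs Hc HQ1) as HQ1p.
  pose proof (Hi Q1 HQ1p) as HWQ1.
  pose proof (HC0 Q1 HWQ1) as H1.
  apply polar_iff in HQ1p; auto. destruct HQ1p as [_ HQ1d].
  pose proof (HQ1d Q HZ) as H2.
  unfold P in HPQ1. rewrite nrm_dot, Hux in HPQ1. rewrite (dot_sym n Q Q1) in HPQ1.
  assert (0 < (1 - ts) * dot n C0 Q1 + ts * dot n Q1 Q) by nra.
  unfold Rdiv in HPQ1. apply Rmult_integral in HPQ1. destruct HPQ1 as [E|E]; [lra|].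
  pose proof (Rinv_0_lt_compat _ Hr). lra.
Qed.

Theorem proposition3p2 (n : nat) (W : vec -> Prop) :
  convex_body n W ->
  ((forall Q, W Q <-> polar n W Q) <-> constant_width n W (PI / 2)).
Proof.
  intros HW. split; [apply forward; auto| apply backward; auto].
Qed.
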